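(* Let $\mathscr G=(\mathscr V,\mathscr E)$ be a finite connected graph with $N$ vertices and $M\ge0$ an integer. The unique stationary distribution $\pi_Y$ of the immediate exchange model on $\mathscr C_{N,M}$ is reversible and $$\pi_Y(\xi)=\frac{\mu(\xi)}{\sum_{\eta\in\mathscr C_{N,M}}\mu(\eta)}\quad\text{where}\quad \mu(\xi)=\prod_{z\in\mathscr V}(\xi(z)+1).$$
   Context: $\mathscr C_{N,M}$ is the set of maps $\xi:\mathscr V\to\mathbb N$ with $\sum_x\xi(x)=M$. The immediate exchange model is the discrete-time Markov chain on $\mathscr C_{N,M}$: at each step an edge $(x,y)\in\mathscr E$ is chosen uniformly at random, independent $U_1$ uniform on $\{0,\dots,Y_t(x)\}$ and $U_2$ uniform on $\{0,\dots,Y_t(y)\}$ are drawn, and $Y_{t+1}(x)=Y_t(x)-U_1+U_2$, $Y_{t+1}(y)=Y_t(y)-U_2+U_1$, $Y_{t+1}(z)=Y_t(z)$ for $z\notin\{x,y\}$. This chain has a unique stationary distribution, denoted $\pi_Y$. *)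

(* Defs.v *)
From HB Require Import structures.
From mathcomp Require Import all_boot all_order all_algebra.
Set Implicit Arguments. Unset Strict Implicit. Unset Printing Implicit Defensive.
Import Order.TTheory GRing.Theory Num.Theory.

(* The state space C_{N,M}: maps xi : V -> nat with sum M
   (encoded with values in 'I_(M.+1), which loses nothing since each
   value is at most M). *)
Definition conf (V : finType) (M : nat) :=
  {f : {ffun V -> 'I_M.+1} | \sum_(x : V) (f x : nat) == M}.

Definition cval (V : finType) (M : nat) (xi : conf V M) (x : V) : nat :=
  val xi x.

Definition edges (V : finType) (e : rel V) : {set V * V} :=
  [set p : V * V | e p.1 p.2].

(* Y_{t+1} given Y_t = xi, chosen edge (x,y) and U1 = u1, U2 = u2. *)
Definition upd (V : finType) (xi : V -> nat) (x y : V) (u1 u2 : nat) : V -> nat :=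
  fun z => if z == x then xi x - u1 + u2
           else if z == y then xi y - u2 + u1 else xi z.

Local Open Scope ring_scope.

(* One-step transition probability P(xi, xi') of the immediate exchange model:
   edge uniform on the edge set, U1 uniform on {0..xi x}, U2 uniform on
   {0..xi y}, independent. *)
Definition ie_kernel (R : realFieldType) (V : finType) (e : rel V) (M : nat)
  (xi xi' : conf V M) : R :=
  \sum_(p in edges e)
     (#|edges e|%:R)^-1 *
     \sum_(u1 < (cval xi p.1).+1) \sum_(u2 < (cval xi p.2).+1)
        ((((cval xi p.1).+1 * (cval xi p.2).+1)%N)%:R)^-1 *
        (if [forall z, cval xi' z == upd (cval xi) p.1 p.2 u1 u2 z]
         then 1 else 0).

Definition is_distribution (R : realFieldType) (T : finType) (p : T -> R) :=
  (forall t, 0 <= p t) /\ \sum_t p t = 1.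

Definition is_stationary (R : realFieldType) (T : finType) (P : T -> T -> R)
  (p : T -> R) :=
  is_distribution p /\ forall t', \sum_t p t * P t t' = p t'.

Definition is_reversible (R : realFieldType) (T : finType) (P : T -> T -> R)
  (p : T -> R) :=
  forall t t', p t * P t t' = p t' * P t' t.

Definition mu (R : realFieldType) (V : finType) (M : nat) (xi : conf V M) : R :=
  \prod_(z : V) ((cval xi z).+1)%:R.

(* Main.v *)
Require Import Defs.
From HB Require Import structures.
From mathcomp Require Import all_boot all_order all_algebra.
From mathcomp Require Import zify ring lra.
Set Implicit Arguments. Unset Strict Implicit. Unset Printing Implicit Defensive.
Import Order.TTheory GRing.Theory Num.Theory.

Section Nat.
Variable V : finType.
Variable M : nat.

Lemma sum_if1 (v : V) (a : nat) : \sum_(z : V) (if z == v then a else 0) = a.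
Proof. by rewrite (bigD1 v) //= eqxx big1 ?addn0 // => z /negbTE ->. Qed.

Lemma le_sum1 (f : V -> nat) z : f z <= \sum_(x : V) f x.
Proof. by rewrite (bigD1 z) //= leq_addr. Qed.

Lemma sum_shift (f g a b : V -> nat) :
  (forall z, f z + a z = g z + b z) ->
  \sum_z f z + \sum_z a z = \sum_z g z + \sum_z b z.
Proof. by move=> H; rewrite -!big_split /=; apply: eq_bigr => z _; apply: H. Qed.

Lemma mkconf_ok (f : V -> nat) (H : \sum_z f z = M) :
  \sum_(x : V) (([ffun z => @inord M (f z)] x) : nat) == M.
Proof.
apply/eqP; transitivity (\sum_z f z); last exact: H.
apply: eq_bigr => z _; rewrite ffunE inordK //.
by rewrite ltnS -H le_sum1.
Qed.

Definition mkconf (f : V -> nat) (H : \sum_z f z = M) : conf V M :=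
  exist (fun g : {ffun V -> 'I_M.+1} => \sum_(x : V) (g x : nat) == M) _ (mkconf_ok H).

Lemma cval_mk (f : V -> nat) (H : \sum_z f z = M) z : cval (mkconf H) z = f z.
Proof. by rewrite /cval /= ffunE inordK // ltnS -H le_sum1. Qed.

Lemma cval_le (xi : conf V M) z : cval xi z <= M.
Proof. by rewrite -ltnS ltn_ord. Qed.

Lemma conf_inj (xi xi' : conf V M) : (forall z, cval xi z = cval xi' z) -> xi = xi'.
Proof. by move=> H; apply: val_inj; apply/ffunP => z; apply: val_inj; apply: H. Qed.

Lemma cval_sum (xi : conf V M) : \sum_z cval xi z = M.
Proof. exact: (eqP (valP xi)). Qed.

Definition move (xi : V -> nat) (x y : V) (a : nat) : V -> nat :=
  fun z => xi z - (if z == x then a else 0) + (if z == y then a else 0).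

Lemma move_sum (xi : conf V M) x y a : a <= cval xi x ->
  \sum_z move (cval xi) x y a z = M.
Proof.
move=> ha.
have := @sum_shift (cval xi) (move (cval xi) x y a) (fun z => if z == y then a else 0)
   (fun z => if z == x then a else 0).
rewrite !sum_if1 cval_sum => H.
suff: M + a = \sum_z move (cval xi) x y a z + a by lia.
apply: H => z; rewrite /move; case: (z =P x) => [->|_]; case: (z =P y) => _; lia.
Qed.

Lemma upd_sum (xi : conf V M) x y u1 u2 : x != y -> u1 <= cval xi x -> u2 <= cval xi y ->
  \sum_z upd (cval xi) x y u1 u2 z = M.
Proof.
move=> hxy h1 h2.
have := @sum_shift (cval xi) (upd (cval xi) x y u1 u2)
   (fun z => (if z == x then u2 else 0) + (if z == y then u1 else 0))
   (fun z => (if z == x then u1 else 0) + (if z == y then u2 else 0)).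
rewrite !big_split /= !sum_if1 cval_sum => H.
suff: M + (u2 + u1) = \sum_z upd (cval xi) x y u1 u2 z + (u1 + u2) by lia.
apply: H => z; rewrite /upd; case: (z =P x) => [->|_].
  rewrite (negbTE hxy); lia.
case: (z =P y) => [->|_]; lia.
Qed.
End Nat.

Lemma upd_sym (V : finType) (f g : V -> nat) x y u1 u2 : x != y ->
  [&& u1 <= f x, u2 <= f y & [forall z, g z == upd f x y u1 u2 z]] =
  [&& u2 <= g x, u1 <= g y & [forall z, f z == upd g x y u2 u1 z]].
Proof.
move=> hxy; have hyx : y != x by rewrite eq_sym.
apply/idP/idP => /and3P[h1 h2 /forallP H];
  have := eqP (H x); have := eqP (H y); rewrite /upd !eqxx ?(negbTE hxy) ?(negbTE hyx) => Hy Hx;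
  (apply/and3P; split; [lia|lia|]); apply/forallP => z; apply/eqP;
  move: (eqP (H z)); rewrite /upd; (case: (z =P x) => [->|_]; [lia|]); (case: (z =P y) => [->|_]; lia).
Qed.


Local Open Scope ring_scope.
Section Ker1.
Variable R : realFieldType.
Variable V : finType.
Variable e : rel V.
Variable M : nat.
Hypothesis e_irr : irreflexive e.

Notation P := (@ie_kernel R V e M).

Lemma sum_gt0 (I : finType) (Q : pred I) (F : I -> R) i0 : Q i0 ->
  (forall i, Q i -> 0 <= F i) -> 0 < F i0 -> 0 < \sum_(i | Q i) F i.
Proof.
move=> Qi F0 Fi; rewrite (bigD1 i0) //=; apply: (lt_le_trans Fi).
by rewrite lerDl sumr_ge0 // => i /andP[/F0].
Qed.

Lemma ker_ge0 xi xi' : 0 <= P xi xi'.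
Proof.
apply: sumr_ge0 => p _; apply: mulr_ge0; first by rewrite invr_ge0 ler0n.
apply: sumr_ge0 => u1 _; apply: sumr_ge0 => u2 _; apply: mulr_ge0.
  by rewrite invr_ge0 ler0n.
by case: ifP.
Qed.

Lemma ker_pos xi xi' x y (u1 u2 : nat) : e x y -> (u1 <= cval xi x)%N -> (u2 <= cval xi y)%N ->
  (forall z, cval xi' z = upd (cval xi) x y u1 u2 z) -> 0 < P xi xi'.
Proof.
move=> exy h1 h2 H.
have hE : (x, y) \in edges e by rewrite inE.
apply: (@sum_gt0 _ _ _ (x, y)) => //.
  move=> p _; apply: mulr_ge0; first by rewrite invr_ge0 ler0n.
  apply: sumr_ge0 => v1 _; apply: sumr_ge0 => v2 _; apply: mulr_ge0.
    by rewrite invr_ge0 ler0n.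
  by case: ifP.
apply: mulr_gt0.
  by rewrite invr_gt0 ltr0n card_gt0; apply/set0Pn; exists (x, y).
have o1 : (u1 < (cval xi x).+1)%N by [].
have o2 : (u2 < (cval xi y).+1)%N by [].
apply: (@sum_gt0 _ _ _ (Ordinal o1)) => //.
  move=> v1 _; apply: sumr_ge0 => v2 _; apply: mulr_ge0.
    by rewrite invr_ge0 ler0n.
  by case: ifP.
apply: (@sum_gt0 _ _ _ (Ordinal o2)) => //.
  move=> v2 _; apply: mulr_ge0.
    by rewrite invr_ge0 ler0n.
  by case: ifP.
apply: mulr_gt0; first by rewrite invr_gt0 ltr0n muln_gt0.
suff -> : [forall z, cval xi' z == upd (cval xi) (x, y).1 (x, y).2 (Ordinal o1) (Ordinal o2) z].
  by rewrite ltr01.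
by apply/forallP => z /=; rewrite H.
Qed.

End Ker1.

Section Ker2.
Variable R : realFieldType.
Variable V : finType.
Variable e : rel V.
Variable M : nat.
Hypothesis e_irr : irreflexive e.

Notation P := (@ie_kernel R V e M).

Lemma ind_sum (xi : conf V M) x y (u1 u2 : nat) : x != y -> (u1 <= cval xi x)%N -> (u2 <= cval xi y)%N ->
  \sum_(xi' : conf V M) (if [forall z, cval xi' z == upd (cval xi) x y u1 u2 z] then 1 else 0 : R) = 1.
Proof.
move=> hxy h1 h2.
rewrite (bigD1 (mkconf (upd_sum hxy h1 h2))) //=.
have -> : [forall z, cval (mkconf (upd_sum hxy h1 h2)) z == upd (cval xi) x y u1 u2 z].
  by apply/forallP => z; rewrite cval_mk.
rewrite big1 ?addr0 // => xi' hne; case: ifP => // /forallP H.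
exfalso; move/negP: hne; apply; apply/eqP; apply: conf_inj => z.
by rewrite cval_mk; apply/eqP.
Qed.

Lemma ker_row xi : (0 < #|edges e|)%N -> \sum_xi' P xi xi' = 1.
Proof.
move=> hE; rewrite /ie_kernel exchange_big /=.
transitivity (\sum_(p in edges e) (#|edges e|%:R)^-1 * (1 : R)); last first.
  rewrite -mulr_sumr sumr_const mulVf //.
  by rewrite pnatr_eq0 -lt0n.
apply: eq_bigr => p hp; rewrite -mulr_sumr; congr (_ * _).
have hxy : p.1 != p.2.
  by apply/eqP => h; move: hp; rewrite inE h e_irr.
rewrite exchange_big /=.
under eq_bigr => u1 _ do rewrite exchange_big /=.
under eq_bigr => u1 _ do under eq_bigr => u2 _ do
  rewrite -mulr_sumr (ind_sum hxy (ltnSE (ltn_ord u1)) (ltnSE (ltn_ord u2))) mulr1.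
rewrite !sumr_const !card_ord -mulrnA mulnC -[RHS](mulVf (x := ((cval xi p.1).+1 * (cval xi p.2).+1)%:R)) ?mulr_natr //.
  by rewrite mulnC.
by rewrite pnatr_eq0 muln_eq0.
Qed.

End Ker2.



Section Rev.
Variable R : realFieldType.
Variable V : finType.
Variable e : rel V.
Variable M : nat.
Hypothesis e_irr : irreflexive e.

Notation P := (@ie_kernel R V e M).

Definition W (xi xi' : conf V M) (x y : V) : R :=
 \sum_(u1 < M.+1) \sum_(u2 < M.+1)
   (if [&& (u1 <= cval xi x)%N, (u2 <= cval xi y)%N &
        [forall z, cval xi' z == upd (cval xi) x y u1 u2 z]] then 1 else 0).

Lemma inner_W (c : R) (xi xi' : conf V M) x y :
  \sum_(u1 < (cval xi x).+1) \sum_(u2 < (cval xi y).+1)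
     (c * (if [forall z, cval xi' z == upd (cval xi) x y u1 u2 z] then 1 else 0))
  = c * W xi xi' x y.
Proof.
rewrite /W mulr_sumr.
rewrite (big_ord_widen (M.+1) (fun u1 => \sum_(u2 < (cval xi y).+1)
     (c * (if [forall z, cval xi' z == upd (cval xi) x y u1 u2 z] then 1 else 0)))); last by rewrite ltnS cval_le.
rewrite big_mkcond /=; apply: eq_bigr => u1 _.
rewrite mulr_sumr.
rewrite (big_ord_widen (M.+1) (fun u2 =>
     (c * (if [forall z, cval xi' z == upd (cval xi) x y u1 u2 z] then 1 else 0)))); last by rewrite ltnS cval_le.
rewrite ltnS; case: (leqP u1 (cval xi x)) => h1 /=.
  rewrite big_mkcond /=; apply: eq_bigr => u2 _; rewrite ltnS.
  by case: (leqP u2 (cval xi y)) => h2 //=; rewrite mulr0.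
by rewrite big1 // => u2 _; rewrite mulr0.
Qed.

Lemma W_sym (xi xi' : conf V M) x y : x != y -> W xi xi' x y = W xi' xi x y.
Proof.
move=> hxy; rewrite /W [RHS]exchange_big /=; apply: eq_bigr => u1 _; apply: eq_bigr => u2 _.
by rewrite upd_sym.
Qed.

Lemma W_agree (xi xi' : conf V M) x y : W xi xi' x y != 0 ->
  forall z, z != x -> z != y -> cval xi z = cval xi' z.
Proof.
move=> hW z hx hy; case: (boolP (cval xi z == cval xi' z)) => [/eqP //|/negP hne].
exfalso; move/eqP: hW; apply; rewrite /W big1 // => u1 _; rewrite big1 // => u2 _.
case: ifP => // /and3P[_ _ /forallP H]; exfalso; apply: hne.
by move: (H z); rewrite /upd (negbTE hx) (negbTE hy) eq_sym.
Qed.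

Definition rest (xi : conf V M) (x y : V) : R :=
  \prod_(z | (z != x) && (z != y)) ((cval xi z).+1)%:R.

Lemma mu_split (xi : conf V M) x y : x != y ->
  mu R xi = (((cval xi x).+1 * (cval xi y).+1)%N)%:R * rest xi x y.
Proof.
move=> hxy; rewrite /mu (bigD1 x) //= (bigD1 y) 1?eq_sym //= natrM mulrA.
congr (_ * _); apply: eq_bigl => z; by rewrite andbC.
Qed.

Lemma rest_W (xi xi' : conf V M) x y : x != y ->
  rest xi x y * W xi xi' x y = rest xi' x y * W xi' xi x y.
Proof.
move=> hxy; rewrite (W_sym xi' xi hxy).
have [->|hW] := eqVneq (W xi xi' x y) 0; first by rewrite !mulr0.
congr (_ * _); apply: eq_bigr => z /andP[h1 h2].
by rewrite (W_agree hW h1 h2).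
Qed.

Lemma mu_rev (xi xi' : conf V M) : mu R xi * P xi xi' = mu R xi' * P xi' xi.
Proof.
rewrite /ie_kernel !mulr_sumr; apply: eq_bigr => p hp.
have hxy : p.1 != p.2 by apply/eqP => h; move: hp; rewrite inE h e_irr.
rewrite !inner_W !mulrA ![mu R _ * _]mulrC -!mulrA; congr (_ * _).
have simp (a r w : R) : a != 0 -> a * r * (a^-1 * w) = r * w.
  by move=> ha; rewrite mulrCA !mulrA mulVf // mul1r.
rewrite (mu_split xi hxy) (mu_split xi' hxy).
rewrite !simp ?pnatr_eq0 ?muln_eq0 //. exact: rest_W.
Qed.

End Rev.

Local Close Scope ring_scope.
Section Irr.
Variable R : realFieldType.
Variable V : finType.
Variable e : rel V.
Variable M : nat.
Hypothesis e_irr : irreflexive e.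
Hypothesis e_conn : forall x y : V, connect e x y.
Variable v0 : V.

Notation P := (@ie_kernel R V e M).

Variable S : conf V M -> Prop.
Hypothesis hS : forall a b, (0 < P a b)%R -> (S a <-> S b).

Lemma move_step (xi xi' : conf V M) x y a : e x y -> a <= cval xi x ->
  (forall z, cval xi' z = move (cval xi) x y a z) -> (S xi <-> S xi').
Proof.
move=> exy ha H; apply: hS; apply: (@ker_pos R V e M xi xi' x y a 0 exy ha) => // z.
have hxy : x != y by apply/eqP => h; move: exy; rewrite h e_irr.
rewrite H /move /upd; case: (z =P x) => [->|_].
  rewrite (negbTE hxy); lia.
case: (z =P y) => [->|_]; lia.
Qed.

Lemma path_step p : forall x (xi xi' : conf V M) a, path e x p -> a <= cval xi x ->
  (forall z, cval xi' z = move (cval xi) x (last x p) a z) -> (S xi <-> S xi').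
Proof.
elim: p => [|w p IH] x xi xi' a /=.
  move=> _ ha H; have -> // : xi = xi'.
  by apply: conf_inj => z; rewrite H /move; case: (z =P x) => [->|_]; lia.
move=> /andP[exw hp] ha H.
have hxw : x != w by apply/eqP => h; move: exw; rewrite h e_irr.
have [mid Hm] : {mid : conf V M | forall z, cval mid z = move (cval xi) x w a z}.
  by exists (mkconf (move_sum w ha)) => z; rewrite cval_mk.
rewrite (move_step exw ha Hm); apply: (IH w mid xi' a hp).
  rewrite Hm /move eqxx eq_sym (negbTE hxw); lia.
move=> z; rewrite H /move !Hm /move.
have [->|hzx] := eqVneq z x.
  by case: (_ == w); case: (_ == last w p); lia.
by case: (_ == w); case: (_ == last w p); lia.
Qed.

Lemma to_v0 (xi xi' : conf V M) x a : a <= cval xi x ->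
  (forall z, cval xi' z = move (cval xi) x v0 a z) -> (S xi <-> S xi').
Proof.
move=> ha H; case/connectP: (e_conn x v0) => p hp hl.
by apply: (path_step hp ha); rewrite -hl.
Qed.

Definition cfg0 : conf V M := mkconf (sum_if1 v0 M).

Lemma to_cfg0 n : forall xi : conf V M, M - cval xi v0 <= n -> (S xi <-> S cfg0).
Proof.
elim: n => [|n IH] xi hn;
(case: (pickP (fun x => (x != v0) && (0 < cval xi x))) => [x /andP[hx hpos] | H]).
- pose xi' := mkconf (move_sum v0 (leqnn (cval xi x))).
  have := cval_le xi' v0; rewrite cval_mk /move eqxx eq_sym (negbTE hx); lia.
- have -> // : xi = cfg0.
  apply: conf_inj => z; rewrite cval_mk.
  case: (z =P v0) => [->|hz]; last by move: (H z); rewrite (introN eqP hz) /=; lia.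
  have := cval_sum xi; rewrite (bigD1 v0) //= big1 ?addn0 // => y hy.
  by move: (H y); rewrite hy /=; lia.
- pose xi' := mkconf (move_sum v0 (leqnn (cval xi x))).
  have hv : cval xi' v0 = cval xi v0 + cval xi x.
    by rewrite cval_mk /move eqxx eq_sym (negbTE hx); lia.
  rewrite (to_v0 (xi' := xi') (leqnn (cval xi x))); last by move=> z; rewrite cval_mk.
  apply: IH; have := cval_le xi' v0; lia.
- have -> // : xi = cfg0.
  apply: conf_inj => z; rewrite cval_mk.
  case: (z =P v0) => [->|hz]; last by move: (H z); rewrite (introN eqP hz) /=; lia.
  have := cval_sum xi; rewrite (bigD1 v0) //= big1 ?addn0 // => y hy.
  by move: (H y); rewrite hy /=; lia.
Qed.

Lemma irred (a b : conf V M) : S a -> S b.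
Proof.
move=> ha; apply/(@to_cfg0 M b (leq_subr _ _)).
by apply/(@to_cfg0 M a (leq_subr _ _)).
Qed.

End Irr.

Local Open Scope ring_scope.
Unset Implicit Arguments.
Theorem lemma4 (R : realFieldType) (V : finType) (e : rel V) (M : nat)
  (e_sym : symmetric e) (e_irr : irreflexive e)
  (e_conn : forall x y : V, connect e x y)
  (hN : (1 < #|V|)%N) :
  let piY := fun xi : conf V M =>
               mu R xi / \sum_(eta : conf V M) mu R eta in
  is_stationary (@ie_kernel R V e M) piY /\
  is_reversible (@ie_kernel R V e M) piY /\
  (forall p : conf V M -> R, is_stationary (@ie_kernel R V e M) p ->
     forall xi, p xi = piY xi).
Proof.
move=> piY.
have [v0 _] : exists v0 : V, v0 \in V by apply/card_gt0P; exact: ltnW.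
have hE : (0 < #|edges e|)%N.
  case: (pickP (fun w => w != v0)) => [w hw | H].
    case/connectP: (e_conn v0 w) => [[|q s]] /=.
      by move=> _ h; move: hw; rewrite h eqxx.
    move=> /andP[eq _] _; rewrite card_gt0; apply/set0Pn; exists (v0, q).
    by rewrite inE.
  have : #|V| = #|pred1 v0|.
    by apply: eq_card => w; rewrite !inE; move: (H w) => /= /negbFE.
  by rewrite card1; move: hN => /[swap] ->.
set P := @ie_kernel R V e M.
have mu_gt0 xi : 0 < mu R xi by apply: prodr_gt0 => z _; rewrite ltr0Sn.
have Z_gt0 : 0 < \sum_(eta : conf V M) mu R eta.
  by apply: (@sum_gt0 R _ _ _ (cfg0 M v0)) => // i _; apply/ltW.
have pi_gt0 xi : 0 < piY xi by rewrite /piY divr_gt0.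
have hrev : is_reversible P piY.
  by move=> t t'; rewrite /piY mulrAC [RHS]mulrAC (mu_rev R e_irr).
have hrow t : \sum_t' P t t' = 1 by apply: ker_row.
have hdist : is_distribution piY.
  split; first by move=> t; apply/ltW.
  by rewrite /piY -mulr_suml mulfV // gt_eqF.
have hstat : is_stationary P piY.
  split => // t'.
  under eq_bigr => t _ do rewrite hrev.
  by rewrite -mulr_sumr hrow mulr1.
split => //; split => // p [[p_ge0 p_sum] p_stat].
pose h t := p t / piY t.
have id1 (a b c : R) : a != 0 -> a * b * (c / a) = c * b by move=> ha; field.
have id2 (a s : R) : a != 0 -> a * s / a = s by move=> ha; field.
have harm t' : h t' = \sum_t P t' t * h t.
  have e1 : p t' = piY t' * \sum_t P t' t * h t.
    rewrite -p_stat mulr_sumr; apply: eq_bigr => t _.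
    by rewrite /h mulrA -hrev id1 // gt_eqF.
  by rewrite {1}/h e1 id2 // gt_eqF.
have [t0 _ Hmax] := @arg_maxP _ R _ (cfg0 M v0) xpredT h isT.
set c := h _ in Hmax.
have clos a b : 0 < P a b -> h a = c -> h b = c.
  move=> hab ha.
  have h0 : \sum_t P a t * (h a - h t) = 0.
    under eq_bigr => t _ do rewrite mulrBr.
    by rewrite sumrB -mulr_suml hrow mul1r -harm subrr.
  have := psumr_eq0P _ h0 (isT : xpredT b).
  move=> /(_ _) H; have /eqP : P a b * (h a - h b) = 0 by apply: H => t _; rewrite mulr_ge0 ?ker_ge0 // subr_ge0 ha; exact: Hmax.
  rewrite mulf_eq0 gt_eqF //= subr_eq0 => /eqP <-; exact: ha.
have hS : forall a b, 0 < P a b -> (h a = c <-> h b = c).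
  move=> a b hab; split; first exact: clos.
  apply: clos; have := hrev a b; rewrite /P => hr.
  have : 0 < piY b * P b a by rewrite -hr mulr_gt0.
  by rewrite pmulr_rgt0.
have all_c t : h t = c by apply: (irred e_irr e_conn v0 hS (a := t0)).
have hp t : p t = c * piY t by rewrite -(all_c t) /h divfK // gt_eqF.
have c1 : c = 1.
  by move: p_sum; under eq_bigr => t _ do rewrite hp; rewrite -mulr_sumr (proj2 hdist) mulr1.
by move=> xi; rewrite hp c1 mul1r.
Qed.
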